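(* Suppose that (i) $K:\mathbb R^p\rightrightarrows\mathbb R^n$ is lower semicontinuous, and (ii) $f:\mathbb R^p\times\mathbb R^n\times\mathbb R^n\to\mathbb R^m$ is $C$-u.s.c. (at every point). Then the function $\nu:\mathbb R^p\times\mathbb R^n\to[0,+\infty]$, $\nu(\xi,x)=\sup_{z\in K(\xi)}\operatorname{dist}(f(\xi,x,z),C)$, is lower semicontinuous on $\mathbb R^p\times\mathbb R^n$.
   Context: $C\subset\mathbb R^m$ is a nontrivial closed, convex, pointed cone. $K:\mathbb R^p\rightrightarrows\mathbb R^n$ is a set-valued mapping with closed graph and $K(\xi)\neq\emptyset$ for every $\xi\in\mathbb R^p$ (standing assumption). A mapping $g:X\to Y$ between Euclidean spaces is $C$-u.s.c. at $x_0$ if for every neighbourhood $V$ of $g(x_0)$ there is a neighbourhood $U$ of $x_0$ with $g(x)\in V-C$ for all $x\in U$; it is $C$-u.s.c. if this holds at every point. $\operatorname{dist}(y,C)=\inf_{c\in C}\|y-c\|$ (Euclidean norm). *)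

(* Defs.v *)
(* R^k is modelled as 'rV[R]_k (row vectors) with its
   canonical (product) topology, which is the Euclidean topology. *)
From HB Require Import structures.
From mathcomp Require Import all_boot all_order all_algebra.
From mathcomp Require Import all_classical all_reals all_analysis.
Set Implicit Arguments. Unset Strict Implicit. Unset Printing Implicit Defensive.
Import Order.TTheory GRing.Theory Num.Theory.
Import numFieldNormedType.Exports.
Local Open Scope classical_set_scope.
Local Open Scope ring_scope.

Definition enorm {R : realType} {k : nat} (v : 'rV[R]_k) : R :=
  Num.sqrt (\sum_(i < k) v ord0 i ^+ 2).

Definition edist {R : realType} {k : nat} (y : 'rV[R]_k) (C : set 'rV[R]_k) : R :=
  inf [set enorm (y - c) | c in C].

Definition nontrivial_closed_convex_pointed_cone {R : realType} {k : nat}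
  (C : set 'rV[R]_k) : Prop :=
  C 0 /\
  (forall (t : R) c, 0 <= t -> C c -> C (t *: c)) /\
  (forall c d, C c -> C d -> C (c + d)) /\
  closed C /\
  (forall c, C c -> C (- c) -> c = 0) /\
  C <> [set 0].

Definition C_usc_at {R : realType} {k : nat} {X : topologicalType}
  (C : set 'rV[R]_k) (g : X -> 'rV[R]_k) (x0 : X) : Prop :=
  forall V, nbhs (g x0) V ->
    exists2 U, nbhs x0 U &
      forall x, U x -> exists2 v, V v & exists2 c, C c & g x = v - c.

Definition C_usc {R : realType} {k : nat} {X : topologicalType}
  (C : set 'rV[R]_k) (g : X -> 'rV[R]_k) : Prop :=
  forall x0, C_usc_at C g x0.

Definition setvalued_lsc {X Y : topologicalType} (K : X -> set Y) : Prop :=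
  forall x0 (V : set Y), open V -> K x0 `&` V !=set0 ->
    exists2 U, nbhs x0 U & forall x, U x -> K x `&` V !=set0.

Definition graph {X Y : Type} (K : X -> set Y) : set (X * Y) :=
  [set pq | K pq.1 pq.2].

Definition nu {R : realType} {p n m : nat}
  (K : 'rV[R]_p -> set 'rV[R]_n)
  (f : 'rV[R]_p * 'rV[R]_n * 'rV[R]_n -> 'rV[R]_m) (C : set 'rV[R]_m)
  (q : 'rV[R]_p * 'rV[R]_n) : \bar R :=
  ereal_sup [set (edist (f (q.1, q.2, z)) C)%:E | z in K q.1].

(* Main.v *)
Require Import Defs.
From HB Require Import structures.
From mathcomp Require Import all_boot all_order all_algebra.
From mathcomp Require Import all_classical all_reals all_analysis.
From mathcomp Require Import ring lra zify.
Import numFieldNormedType.Exports.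
Import Order.TTheory GRing.Theory Num.Theory.
Local Open Scope classical_set_scope.
Local Open Scope ring_scope.

Lemma cs_ineq (R : realType) (k : nat) (a b : 'I_k -> R) :
  (\sum_i a i * b i) ^+ 2 <= (\sum_i a i ^+ 2) * (\sum_i b i ^+ 2).
Proof.
set A := \sum_i a i ^+ 2; set B := \sum_i b i ^+ 2; set S := \sum_i a i * b i.
have key t : 0 <= t ^+ 2 * A + (2 * t) * S + B.
  have -> : t ^+ 2 * A + (2 * t) * S + B = \sum_i (t * a i + b i) ^+ 2.
    rewrite /A /B /S !mulr_sumr -!big_split /=; apply: eq_bigr => i _; ring.
  by apply: sumr_ge0 => i _; exact: sqr_ge0.
have A0 : 0 <= A by apply: sumr_ge0 => i _; exact: sqr_ge0.
have [Az|Ap] := eqVneq A 0.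
  have ai i : a i = 0.
    have := psumr_eq0P (P := xpredT) (F := fun i => a i ^+ 2) (fun i _ => sqr_ge0 (a i)) Az (i := i) isT.
    by move/eqP; rewrite sqrf_eq0 => /eqP.
  have -> : S = 0 by rewrite /S big1 // => i _; rewrite ai mul0r.
  by rewrite expr0n /= Az mul0r.
have := key (- S / A).
have -> : (- S / A) ^+ 2 * A + (2 * (- S / A)) * S + B = (A * B - S ^+ 2) / A.
  by field.
rewrite pmulr_lge0 ?subr_ge0 // invr_gt0 lt_neqAle eq_sym Ap A0 //.
Qed.

Lemma enorm_ge0 (R : realType) (k : nat) (v : 'rV[R]_k) : 0 <= enorm v.
Proof. exact: sqrtr_ge0. Qed.

Lemma enorm_triangle (R : realType) (k : nat) (u w : 'rV[R]_k) :
  enorm (u + w) <= enorm u + enorm w.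
Proof.
rewrite /enorm.
set A := \sum_i u ord0 i ^+ 2; set B := \sum_i w ord0 i ^+ 2.
have A0 : 0 <= A by apply: sumr_ge0 => i _; exact: sqr_ge0.
have B0 : 0 <= B by apply: sumr_ge0 => i _; exact: sqr_ge0.
set S := \sum_i u ord0 i * w ord0 i.
have E : \sum_i (u + w) ord0 i ^+ 2 = A + 2 * S + B.
  rewrite /A /B /S mulr_sumr -!big_split /=; apply: eq_bigr => i _.
  rewrite mxE; ring.
rewrite E.
have hS : S <= Num.sqrt A * Num.sqrt B.
  rewrite -sqrtrM //.
  apply: (le_trans (ler_norm S)).
  rewrite -(sqrtr_sqr S) ler_sqrt ?mulr_ge0 //.
  exact: cs_ineq.
have Y0 : 0 <= Num.sqrt A + Num.sqrt B by rewrite addr_ge0 // sqrtr_ge0.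
rewrite -(ger0_norm Y0) -sqrtr_sqr ler_sqrt ?sqr_ge0 //.
move: hS; clearbody A B S => hS.
rewrite sqrrD !sqr_sqrtr // -mulr_natl.
by rewrite lerD2r lerD2l mulr1 mulr_natl lerMn2r hS orbT.
Qed.

Lemma enorm_small (R : realType) (k : nat) (u : 'rV[R]_k) (d : R) :
  0 < d -> (forall i, `|u ord0 i| < d / k.+1%:R) -> enorm u < d.
Proof.
move=> d0 hu.
set e := d / k.+1%:R.
have k0 : 0 < k.+1%:R :> R by rewrite ltr0n.
have e0 : 0 < e by rewrite divr_gt0.
have h1 : \sum_i u ord0 i ^+ 2 <= k%:R * e ^+ 2.
  have -> : k%:R * e ^+ 2 = \sum_(i < k) e ^+ 2 by rewrite sumr_const card_ord mulr_natl.
  apply: ler_sum => i _.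
  have := hu i; rewrite ltr_norml => /andP [h2 h3].
  rewrite -/e in h2 h3. nra.
have hd : e * k.+1%:R = d by rewrite /e divfK // gt_eqF.
have h2 : k%:R * e ^+ 2 < d ^+ 2.
  move: hd h1; clearbody e => hd h1.
  rewrite -hd exprMn [_ * e ^+ 2]mulrC ltr_pM2l ?exprn_gt0 //.
  rewrite -natrX ltr_nat expnS expn1; nia.
rewrite /enorm -(ger0_norm (ltW d0)) -sqrtr_sqr.
apply: le_lt_trans (_ : Num.sqrt (k%:R * e ^+ 2) < _).
  by rewrite ler_sqrt // mulr_ge0 // ?sqr_ge0.
by rewrite ltr_sqrt // exprn_gt0.
Qed.

Lemma edist_le (R : realType) (k : nat) (y : 'rV[R]_k) (C : set 'rV[R]_k) (c : 'rV[R]_k) :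
  C c -> Defs.edist y C <= enorm (y - c).
Proof.
move=> Cc; rewrite /Defs.edist; apply: ge_inf; last by exists c.
by exists 0 => _ [c1 _ <-]; exact: enorm_ge0.
Qed.

Lemma edist_ge (R : realType) (k : nat) (y : 'rV[R]_k) (C : set 'rV[R]_k) (a : R) :
  C !=set0 -> (forall c, C c -> a <= enorm (y - c)) -> a <= Defs.edist y C.
Proof.
move=> [c0 Cc0] h; apply: lb_le_inf; first by exists (enorm (y - c0)), c0.
by move=> _ [c Cc <-]; exact: h.
Qed.

Theorem mainTheorem1 (R : realType) (p n m : nat)
  (C : set 'rV[R]_m)
  (K : 'rV[R]_p -> set 'rV[R]_n)
  (f : 'rV[R]_p * 'rV[R]_n * 'rV[R]_n -> 'rV[R]_m)
  (hC : nontrivial_closed_convex_pointed_cone C)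
  (hKgraph : closed (graph K))
  (hKne : forall xi, K xi !=set0)
  (hKlsc : setvalued_lsc K)
  (hf : C_usc C f) :
  lower_semicontinuous (nu K f C).
Proof.
case: hC => C0 [_ [Cadd _]].
move=> [xi0 x0] a ha.
have [_ [z0 Kz0 <-] ltaD] := ereal_sup_gt ha.
rewrite lte_fin /= in ltaD.
set y0 := f (xi0, x0, z0) in ltaD.
set D := Defs.edist y0 C in ltaD.
set d := (D - a) / 2.
have d0 : 0 < d by rewrite divr_gt0 // subr_gt0.
set e := d / m.+1%:R.
have e0 : 0 < e by rewrite divr_gt0 // ltr0n.
have hV : nbhs y0 [set v : 'rV[R]_m | forall i, `|v ord0 i - y0 ord0 i| < e].
  apply/nbhs_ballP; exists e => // v /= [_ H] i.
  by have := H ord0 i; rewrite /ball /= distrC.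
have [U hU hUf] := hf (xi0, x0, z0) _ hV.
case: hU => [[A B] /= [hA hB] hAB].
move: hB; rewrite nbhsE => -[B' [oB' B'z0] B'B].
have [U' hU' hK] := hKlsc xi0 B' oB' (ex_intro _ z0 (conj Kz0 B'z0)).
exists (A `&` [set q | U' q.1]).
  apply: filterI => //.
  exists (U', setT) => //=; last by move=> [? ?] [].
  by split => //; exact: filterT.
move=> [xi x] [Aq U'q].
have [z [Kz B'z]] := hK xi U'q.
have [v Vv [c Cc fe]] := hUf (xi, x, z) (hAB (xi, x, z) (conj Aq (B'B _ B'z))).
apply: (lt_le_trans _ (ereal_sup_ubound _)); last by exists z.
rewrite lte_fin /= fe.
have ad : a < D - d by rewrite /d; lra.
apply: (lt_le_trans ad).
apply: edist_ge; first by exists 0.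
move=> c' Cc'.
have h1 : D <= enorm (y0 - (c + c')) by apply: edist_le; exact: Cadd.
have h2 : enorm (y0 - (c + c')) <= enorm (y0 - v) + enorm (v - c - c').
  have -> : y0 - (c + c') = (y0 - v) + (v - c - c') by rewrite opprD !addrA subrK.
  exact: enorm_triangle.
have h3 : enorm (y0 - v) < d.
  apply: enorm_small => // i.
  by rewrite !mxE distrC; exact: Vv.
lra.
Qed.
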